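(* Let $i,j\in[s]$ with $i\neq j$. Then there is no homomorphism from $F_i^{\bullet\bullet}$ to $F_j^{\bullet\bullet}$ (both viewed as ordinary digraphs).
   Context: All digraphs are finite and loopless; a tournament is a digraph in which every pair of distinct vertices is joined by exactly one arc. A homomorphism from a digraph $F$ to a digraph $H$ is a map $\varphi:V(F)\to V(H)$ with $(\varphi(u),\varphi(v))\in E(H)$ whenever $(u,v)\in E(F)$. Construction of $F_i^{\bullet\bullet}$: fix $s\in\mathbb{N}^+$, a positive integer $m$, and a tournament $F_0$ on vertex set $[m]$ satisfying: (I) every vertex has out-degree and in-degree at most $2m/3$; (II) there are no disjoint $A_1,A_2\subseteq[m]$ with $|A_1|=|A_2|=\lceil\sqrt m\,\rceil$ such that $(a_1,a_2)$ is an arc for all $a_1\in A_1,a_2\in A_2$; (III) for every $S\subseteq[m]$ with $|S|\ge 2m/13-\sqrt m$, $F_0[S]$ contains a directed cycle. Let $k_1,\dots,k_s$ be integers in the open interval $(2m/3+2,\,5m/6)$ with $k_i>k_{i+1}+1$ for $1\le i<s$. For $i\in[s]$, $F_i^{\bullet\bullet}$ is the digraph on vertex set $[m]\cup\{z_i,w_i\}$ ($z_i,w_i$ two new vertices, called roots) whose arcs are all arcs of $F_0$, together with the arcs $z_i\to v$ and $v\to w_i$ for every $1\le v\le k_i$, and the arcs $u\to z_i$ and $w_i\to u$ for every $k_i<u\le m$. There is no arc between $z_i$ and $w_i$. *)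

(* Defs.v *)
From mathcomp Require Import all_boot.
Set Implicit Arguments. Unset Strict Implicit. Unset Printing Implicit Defensive.

(* Vertex i of [m] = {1..m} is represented by the ordinal i-1 : 'I_m. *)

Definition is_tournament (T : finType) (e : rel T) : Prop :=
  (forall x, ~~ e x x) /\ (forall x y, x != y -> e x y (+) e y x).

(* ceil(sqrt m): least c with m <= c^2 (always found in 0..m). *)
Definition ceil_sqrt (m : nat) : nat := find (fun c => m <= c * c) (iota 0 m.+1).

Definition has_dicycle (T : finType) (e : rel T) (S : {set T}) : Prop :=
  exists p : seq T, [/\ p != [::], uniq p, {subset p <= S} & cycle e p].

Definition cond_I (m : nat) (F0 : rel 'I_m) : Prop :=
  forall u : 'I_m, 3 * #|[set v | F0 u v]| <= 2 * m /\ 3 * #|[set v | F0 v u]| <= 2 * m.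

Definition cond_II (m : nat) (F0 : rel 'I_m) : Prop :=
  ~ exists A1 A2 : {set 'I_m},
      [/\ [disjoint A1 & A2], #|A1| = ceil_sqrt m, #|A2| = ceil_sqrt m &
          forall a1 a2, a1 \in A1 -> a2 \in A2 -> F0 a1 a2].

(* Condition (III): |S| >= 2m/13 - sqrt m, i.e. 13|S| + 13 sqrt m >= 2m,
   written exactly in nat as 169 m >= (2m - 13|S|)^2 (truncated subtraction). *)
Definition cond_III (m : nat) (F0 : rel 'I_m) : Prop :=
  forall S : {set 'I_m}, (2 * m - 13 * #|S|) ^ 2 <= 169 * m -> has_dicycle F0 S.

(* Vertex type of F^{bullet bullet}: inl v for v in [m]; inr true = z, inr false = w. *)
Definition Vbb (m : nat) : finType := ('I_m + bool)%type.

Definition Fbb (m : nat) (F0 : rel 'I_m) (k : nat) : rel (Vbb m) :=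
  fun x y =>
    match x, y with
    | inl u, inl v => F0 u v
    | inr true, inl v => v.+1 <= k
    | inl v, inr false => v.+1 <= k
    | inl u, inr true => k < u.+1
    | inr false, inl u => k < u.+1
    | _, _ => false
    end.

Definition is_hom (T1 T2 : finType) (e1 : rel T1) (e2 : rel T2) (phi : T1 -> T2) : Prop :=
  forall x y, e1 x y -> e2 (phi x) (phi y).

(* Main.v *)
Require Import Defs.
From mathcomp Require Import all_boot.
From mathcomp Require Import zify.

Lemma card_lt_set m k : k <= m -> #|[set y : 'I_m | y < k]| = k.
Proof.
move=> km.
have -> : [set y : 'I_m | y < k] = widen_ord km @: [set: 'I_k].
  apply/setP => y; rewrite inE; apply/idP/imsetP.
  - by move=> yk; exists (Ordinal yk) => //; apply: val_inj.
  - by case=> z _ ->; rewrite /= ltn_ord.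
by rewrite card_imset ?cardsT ?card_ord //; by move=> a b /(congr1 val) /= /val_inj.
Qed.

Lemma card_ge_set m k : k <= m -> #|[set y : 'I_m | k <= y]| = m - k.
Proof.
move=> km; have := cardsC [set y : 'I_m | y < k].
rewrite card_lt_set // card_ord.
have -> : ~: [set y : 'I_m | y < k] = [set y : 'I_m | k <= y].
  by apply/setP=> y; rewrite !inE -leqNgt.
lia.
Qed.

Lemma inj_card m (A B : {set 'I_m}) (f : 'I_m -> 'I_m) :
  {in A &, injective f} -> (forall x, x \in A -> f x \in B) -> #|A| <= #|B|.
Proof.
move=> inj H; rewrite -(card_in_imset inj); apply: subset_leq_card.
by apply/subsetP => y /imsetP [x xA ->]; exact: H.
Qed.

Lemma Fbb_irr m (F0 : rel 'I_m) k : (forall x, ~~ F0 x x) -> forall x, ~~ Fbb F0 k x x.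
Proof. by move=> H [u|[]] //=; exact: H. Qed.

Lemma kdec s (k : nat -> nat) :
  (forall i, 1 <= i < s -> (k i.+1).+1 < k i) ->
  forall i j, 1 <= i -> i < j -> j <= s -> k j < k i.
Proof.
move=> H i; elim=> [|j IH] // i1 ij js.
have Hj := H j.
case: (ltngtP i j) => [lij|lji|eij].
- have := IH i1 lij (ltnW js).
  have : (1 <= j < s) by apply/andP; split; [exact: leq_trans i1 (ltnW lij)|].
  move=> /Hj; lia.
- lia.
- have : (1 <= j < s) by apply/andP; split; [rewrite -eij|].
  move=> /Hj; rewrite eij; lia.
Qed.

Theorem claim4p5 (s m : nat) (F0 : rel 'I_m) (k : nat -> nat) :
  0 < s -> 0 < m ->
  is_tournament F0 -> cond_I F0 -> cond_II F0 -> cond_III F0 ->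
  (forall i, 1 <= i <= s -> 2 * m + 6 < 3 * k i /\ 6 * k i < 5 * m) ->
  (forall i, 1 <= i < s -> (k i.+1).+1 < k i) ->
  forall i j, 1 <= i <= s -> 1 <= j <= s -> i != j ->
  ~ exists phi : Vbb m -> Vbb m, is_hom (Fbb F0 (k i)) (Fbb F0 (k j)) phi.
Proof.
move=> s0 m0 [irr0 tour] cI _ _ kb kd i j /andP[i1 iS] /andP[j1 jS] ij [phi hom].
have [ki1 ki2] := kb i (introT andP (conj i1 iS)).
have [kj1 kj2] := kb j (introT andP (conj j1 jS)).
have kne : k i != k j.
  case: (ltngtP i j) ij => // [lij|lji] _.
    by have := @kdec s k kd i j i1 lij jS; lia.
  by have := @kdec s k kd j i j1 lji iS; lia.
set ki := k i in ki1 ki2 kne hom; set kj := k j in kj1 kj2 kne hom.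
have irr := @Fbb_irr m F0 kj irr0.
have eneq : forall x y, Fbb F0 ki x y -> phi x != phi y.
  move=> x y /hom e; apply/eqP => E; move: e; rewrite E.
  by rewrite (negbTE (irr _)).
have neq : forall u v : 'I_m, u != v -> phi (inl u) != phi (inl v).
  move=> u v /tour; case e: (F0 u v) => /= e2.
    by apply: eneq.
  by rewrite eq_sym; apply: eneq.
pose sg v := if phi (inl v) is inl y then y else v.
have sg_inj : forall A : {set 'I_m},
    (forall v, v \in A -> phi (inl v) = inl (sg v)) -> {in A &, injective sg}.
  move=> A HA u v uA vA E; apply/eqP; apply: contraT => /neq.
  by rewrite HA // HA // E eqxx.
case: (boolP [exists a : 'I_m, ~~ (if phi (inl a) is inl _ then true else false)]).
  case/existsP => a; case E: (phi (inl a)) => [y|c] // _.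
  pose Np := [set v | F0 a v]; pose Nn := [set v | F0 v a].
  have cov : m <= #|Np| + #|Nn| + 1.
    have sub : [set: 'I_m] \subset Np :|: Nn :|: [set a].
      apply/subsetP => v _; rewrite !inE.
      case: (eqVneq v a) => [->|va]; first by rewrite ?inE ?eqxx ?orbT.
      by move: (tour _ _ va); case: (F0 a v); case: (F0 v a).
    have := subset_leq_card sub; rewrite cardsT card_ord !cardsU cards1.
    by move/leq_trans; apply; rewrite (leq_trans (leq_subr _ _)) // leq_add2r leq_subr.
  have [cI1 cI2] := cI a; rewrite -/Np -/Nn in cI1 cI2.
  case: c E => E.
  - have : #|Nn| <= #|[set y : 'I_m | kj <= y]|.
      apply: (@inj_card m _ _ sg).
        apply: sg_inj => v; rewrite inE => hv; have := hom (inl v) (inl a) hv.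
        by rewrite E /sg; case: (phi (inl v)) => [y|[]].
      move=> v; rewrite !inE => hv; have := hom (inl v) (inl a) hv.
      by rewrite E /sg; case: (phi (inl v)) => [y|[]].
    rewrite card_ge_set; last lia.
    lia.
  - have : #|Np| <= #|[set y : 'I_m | kj <= y]|.
      apply: (@inj_card m _ _ sg).
        apply: sg_inj => v; rewrite inE => hv; have := hom (inl a) (inl v) hv.
        by rewrite E /sg; case: (phi (inl v)) => [y|[]].
      move=> v; rewrite !inE => hv; have := hom (inl a) (inl v) hv.
      by rewrite E /sg; case: (phi (inl v)) => [y|[]].
    rewrite card_ge_set; last lia.
    lia.
rewrite negb_exists => /forallP allin.
have Hsg : forall v, phi (inl v) = inl (sg v).
  by move=> v; have := allin v; rewrite /sg; case: (phi (inl v)).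
have sinj : {in [set: 'I_m] &, injective sg} by apply: sg_inj.
have edge : forall v : 'I_m, Fbb F0 ki (inr true) (inl v) || Fbb F0 ki (inl v) (inr true).
  by move=> v /=; case: leqP.
case Ez: (phi (inr true)) => [x|[]].
- have : #|[set: 'I_m]| <= #|[set~ x]|.
    apply: (@inj_card m _ _ sg sinj) => v _; rewrite !inE.
    have := edge v; case/orP => /eneq; rewrite Ez Hsg //.
    by rewrite eq_sym.
  by rewrite cardsC1 cardsT card_ord; lia.
- have h1 : #|[set v : 'I_m | v < ki]| <= #|[set y : 'I_m | y < kj]|.
    apply: (@inj_card m _ _ sg) => [u v _ _|v]; first exact: sinj.
    rewrite !inE => vk; have := hom (inr true) (inl v); rewrite Ez Hsg /=.
    by apply.
  have h2 : #|[set v : 'I_m | ki <= v]| <= #|[set y : 'I_m | kj <= y]|.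
    apply: (@inj_card m _ _ sg) => [u v _ _|v]; first exact: sinj.
    rewrite !inE => vk; have := hom (inl v) (inr true); rewrite Ez Hsg /=.
    by rewrite ltnS; apply.
  move: h1 h2; rewrite !card_lt_set ?card_ge_set; try lia.
- have h1 : #|[set v : 'I_m | v < ki]| <= #|[set y : 'I_m | kj <= y]|.
    apply: (@inj_card m _ _ sg) => [u v _ _|v]; first exact: sinj.
    rewrite !inE => vk; have := hom (inr true) (inl v); rewrite Ez Hsg /=.
    by rewrite ltnS; apply.
  move: h1; rewrite card_lt_set ?card_ge_set; lia.
Qed.
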